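(* Let $A\in\mathbb{R}^{n\times d}$ have rows $\boldsymbol{a}_i^\top$ with $\max_i\|\boldsymbol{a}_i\|_2^2\le R$, $\lambda>0$; let each $f_i:\mathbb{R}\to\mathbb{R}$ be convex and $\beta$-smooth, $\alpha$-strongly convex over some convex set and linear outside it, with $\alpha\ge\beta/2$; let $g$ be $\mu$-strongly convex and $L$-smooth. Let $(\boldsymbol{x}^{(t)},\boldsymbol{y}^{(t)})$ be the iterates of Algorithm 1 (described in the context) with dual step size $\delta>0$ and $k$ dual coordinates updated per iteration. Then for every $t\ge1$, $$\Delta_d^{(t)}-\Delta_d^{(t-1)}+\Delta_p^{(t)}-\Delta_p^{(t-1)}\le\mathcal{L}(\boldsymbol{x}^{(t+1)},\boldsymbol{y}^{(t)})-\mathcal{L}(\boldsymbol{x}^{(t)},\boldsymbol{y}^{(t)})-\frac{1}{2\delta}\|\boldsymbol{y}^{(t)}-\boldsymbol{y}^{(t-1)}\|^2+\frac{2\delta Rk}{n^2}\|\bar{\boldsymbol{x}}^{(t)}-\boldsymbol{x}^{(t)}\|^2.$$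
   Context: $\mathcal{L}(\boldsymbol{x},\boldsymbol{y})=g(\boldsymbol{x})+\frac1n\langle\boldsymbol{y},A\boldsymbol{x}\rangle-\frac1n\sum_if_i^*(y_i)$ ($f_i^*$ convex conjugate); $D(\boldsymbol{y})=\min_{\|\boldsymbol{x}\|_1\le\lambda}\mathcal{L}(\boldsymbol{x},\boldsymbol{y})$, $D^*=\max D$; $\bar{\boldsymbol{x}}^{(t)}=\arg\min_{\|\boldsymbol{x}\|_1\le\lambda}\mathcal{L}(\boldsymbol{x},\boldsymbol{y}^{(t)})$; $\Delta_p^{(t)}=\mathcal{L}(\boldsymbol{x}^{(t+1)},\boldsymbol{y}^{(t)})-\mathcal{L}(\bar{\boldsymbol{x}}^{(t)},\boldsymbol{y}^{(t)})$; $\Delta_d^{(t)}=D^*-D(\boldsymbol{y}^{(t)})$. Algorithm 1 (parameters: integer $s$, $\eta\in(0,1]$, $\delta>0$, integer $k$): $\boldsymbol{x}^{(0)}=0$, $\boldsymbol{y}^{(0)}=0$; for $t=1,2,\dots$: $\tilde{\boldsymbol{x}}\in\arg\min_{\|\boldsymbol{x}\|_1\le\lambda,\|\boldsymbol{x}\|_0\le s}\{\langle\frac1nA^\top\boldsymbol{y}^{(t-1)}+\nabla g(\boldsymbol{x}^{(t-1)}),\boldsymbol{x}\rangle+\frac L2\eta\|\boldsymbol{x}-\boldsymbol{x}^{(t-1)}\|^2\}$, $\boldsymbol{x}^{(t)}=(1-\eta)\boldsymbol{x}^{(t-1)}+\eta\tilde{\boldsymbol{x}}$; $\tilde{\boldsymbol{y}}=\arg\max_{\boldsymbol{y}'}\{\frac1n\langle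 A\boldsymbol{x}^{(t)},\boldsymbol{y}'\rangle-\frac1n\sum_if_i^*(y_i')-\frac1{2\delta}\|\boldsymbol{y}'-\boldsymbol{y}^{(t-1)}\|^2\}$; $I^{(t)}$ = the $k$ indices $i\in[n]$ with largest $|\tilde y_i-y_i^{(t-1)}|$; $y_i^{(t)}=\tilde y_i$ for $i\in I^{(t)}$, $y_i^{(t)}=y_i^{(t-1)}$ otherwise. *)

(* Defs.v *)
From HB Require Import structures.
From mathcomp Require Import all_boot all_order all_algebra.
From mathcomp Require Import all_classical all_reals all_analysis.
Set Implicit Arguments. Unset Strict Implicit. Unset Printing Implicit Defensive.
Import Order.TTheory GRing.Theory Num.Theory.
Local Open Scope classical_set_scope.
Local Open Scope ring_scope.

Section Defs.
Variable R : realType.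

Definition dotv {m : nat} (u v : 'cV[R]_m) : R := \sum_(i < m) u i 0 * v i 0.
Definition sqnorm {m : nat} (u : 'cV[R]_m) : R := dotv u u.
Definition norm2 {m : nat} (u : 'cV[R]_m) : R := Num.sqrt (sqnorm u).
Definition norm1 {m : nat} (u : 'cV[R]_m) : R := \sum_(i < m) `|u i 0|.
Definition norm0 {m : nat} (u : 'cV[R]_m) : nat := #|[set i | u i 0 != 0]|.

Definition convex_setR (C : set R) : Prop :=
  forall x y th, C x -> C y -> 0 <= th <= 1 -> C (th * x + (1 - th) * y).

Definition convexR (f : R -> R) : Prop :=
  forall x y th, 0 <= th <= 1 ->
    f (th * x + (1 - th) * y) <= th * f x + (1 - th) * f y.

Definition smoothR (beta : R) (f : R -> R) : Prop :=
  (forall x, derivable f x 1) /\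
  (forall x y, `|derive1 f x - derive1 f y| <= beta * `|x - y|).

Definition strongly_convex_onR (alpha : R) (C : set R) (f : R -> R) : Prop :=
  forall x y th, C x -> C y -> 0 <= th <= 1 ->
    f (th * x + (1 - th) * y)
      <= th * f x + (1 - th) * f y - alpha / 2 * th * (1 - th) * (x - y) ^+ 2.

Definition linear_outsideR (C : set R) (f : R -> R) : Prop :=
  forall x y th, (forall z, Num.min x y <= z <= Num.max x y -> ~ C z) ->
    0 <= th <= 1 -> f (th * x + (1 - th) * y) = th * f x + (1 - th) * f y.

Definition is_gradient {m : nat} (g : 'cV[R]_m -> R) (G : 'cV[R]_m -> 'cV[R]_m) : Prop :=
  forall x (eps : R), 0 < eps -> exists2 del : R, 0 < del & forall h : 'cV[R]_m,
    norm2 h < del -> `|g (x + h) - g x - dotv (G x) h| <= eps * norm2 h.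

Definition strongly_convexV {m : nat} (mu : R) (g : 'cV[R]_m -> R) : Prop :=
  forall x y th, 0 <= th <= 1 ->
    g (th *: x + (1 - th) *: y)
      <= th * g x + (1 - th) * g y - mu / 2 * th * (1 - th) * sqnorm (x - y).

Definition smoothV {m : nat} (L : R) (g : 'cV[R]_m -> R) (G : 'cV[R]_m -> 'cV[R]_m) : Prop :=
  is_gradient g G /\ forall x y, norm2 (G x - G y) <= L * norm2 (x - y).

Definition conj_fun (f : R -> R) (y : R) : \bar R :=
  ereal_sup [set ((y * x - f x)%:E) | x in [set: R]].

Definition Lag {n d : nat} (g : 'cV[R]_d -> R) (f : 'I_n -> R -> R)
    (A : 'M[R]_(n, d)) (x : 'cV[R]_d) (y : 'cV[R]_n) : \bar R :=
  ((g x + n%:R^-1 * dotv y (A *m x))%:E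
    - (n%:R^-1)%:E * \sum_(i < n) conj_fun (f i) (y i ord0))%E.

Definition Dual {n d : nat} (g : 'cV[R]_d -> R) (f : 'I_n -> R -> R)
    (A : 'M[R]_(n, d)) (lam : R) (y : 'cV[R]_n) : \bar R :=
  ereal_inf [set Lag g f A x y | x in [set x : 'cV[R]_d | norm1 x <= lam]].

Definition Dstar {n d : nat} (g : 'cV[R]_d -> R) (f : 'I_n -> R -> R)
    (A : 'M[R]_(n, d)) (lam : R) : \bar R :=
  ereal_sup (range (Dual g f A lam)).

Definition algorithm1 {n d : nat} (g : 'cV[R]_d -> R) (G : 'cV[R]_d -> 'cV[R]_d)
    (f : 'I_n -> R -> R) (A : 'M[R]_(n, d)) (lam L : R)
    (s : nat) (eta delta : R) (k : nat)
    (x : nat -> 'cV[R]_d) (y : nat -> 'cV[R]_n) : Prop :=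
  x 0%N = 0 /\ y 0%N = 0 /\
  forall t : nat, (1 <= t)%N ->
    (exists2 xt : 'cV[R]_d,
       (norm1 xt <= lam /\ (norm0 xt <= s)%N /\
        forall x' : 'cV[R]_d, norm1 x' <= lam -> (norm0 x' <= s)%N ->
          dotv (n%:R^-1 *: (A^T *m y t.-1) + G (x t.-1)) xt
            + L / 2 * eta * sqnorm (xt - x t.-1)
          <= dotv (n%:R^-1 *: (A^T *m y t.-1) + G (x t.-1)) x'
            + L / 2 * eta * sqnorm (x' - x t.-1))
     & x t = (1 - eta) *: x t.-1 + eta *: xt) /\
    (exists yt : 'cV[R]_n,
       (forall y' : 'cV[R]_n,
          ((n%:R^-1 * dotv (A *m x t) y' - (2 * delta)^-1 * sqnorm (y' - y t.-1))%:E
             - (n%:R^-1)%:E * \sum_(i < n) conj_fun (f i) (y' i ord0)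
          <= (n%:R^-1 * dotv (A *m x t) yt - (2 * delta)^-1 * sqnorm (yt - y t.-1))%:E
             - (n%:R^-1)%:E * \sum_(i < n) conj_fun (f i) (yt i ord0))%E) /\
       exists I : {set 'I_n},
         #|I| = k /\
         (forall i j, i \in I -> j \notin I ->
            `|yt j 0 - y t.-1 j 0| <= `|yt i 0 - y t.-1 i 0|) /\
         (forall i, y t i 0 = if i \in I then yt i 0 else y t.-1 i 0)).

End Defs.

(* Main.v *)
Require Import Defs.
From HB Require Import structures.
From mathcomp Require Import all_boot all_order all_algebra.
From mathcomp Require Import all_classical all_reals all_analysis.
From mathcomp Require Import lra ring.
Import Order.TTheory GRing.Theory Num.Theory.
Local Open Scope classical_set_scope.
Local Open Scope ring_scope.

Section H.
Variable R : realType.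

Lemma conj_gtNy (f : R -> R) v : (-oo < conj_fun f v)%E.
Proof.
apply: (lt_le_trans _ (ereal_sup_ubound _)); last by exists 0.
exact: ltNyr.
Qed.

Lemma conj_cvx (f : R -> R) u v cu cv th :
  conj_fun f u = cu%:E -> conj_fun f v = cv%:E -> 0 <= th <= 1 ->
  (conj_fun f (th * u + (1 - th) * v) <= (th * cu + (1 - th) * cv)%:E)%E.
Proof.
move=> hu hv /andP[t0 t1].
apply: ub_ereal_sup => _ [z _ <-]; rewrite lee_fin.
have h1 : u * z - f z <= cu by rewrite -lee_fin -hu; apply: ereal_sup_ubound; exists z.
have h2 : v * z - f z <= cv by rewrite -lee_fin -hv; apply: ereal_sup_ubound; exists z.
have t2 : 0 <= 1 - th by lra.
nra.
Qed.

Lemma fin_le (x : \bar R) r : (-oo < x)%E -> (x <= r%:E)%E -> x \is a fin_num.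
Proof.
move=> h1 h2; rewrite fin_numE; apply/andP; split.
  by rewrite gt_eqF.
by apply/negP => /eqP xy; move: h2; rewrite xy.
Qed.

Lemma objE n (N P : R) (f : 'I_n -> R -> R) (y : 'cV[R]_n) :
  (forall i, conj_fun (f i) (y i ord0) \is a fin_num) ->
  (P%:E - N%:E * \sum_(i < n) conj_fun (f i) (y i ord0))%E
   = (P - N * \sum_(i < n) fine (conj_fun (f i) (y i ord0)))%:E.
Proof.
move=> h.
rewrite (eq_bigr (fun i => (fine (conj_fun (f i) (y i ord0)))%:E)); last first.
  by move=> i _; rewrite fineK.
by rewrite sumEFin -EFinM -EFinB.
Qed.

Lemma objNy n (N P : R) (f : 'I_n -> R -> R) (y : 'cV[R]_n) : 0 < N ->
  ~ (forall i, conj_fun (f i) (y i ord0) \is a fin_num) ->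
  (P%:E - N%:E * \sum_(i < n) conj_fun (f i) (y i ord0))%E = -oo%E.
Proof.
move=> N0 h.
have [i hi] : exists i, conj_fun (f i) (y i ord0) = +oo%E.
  apply: contra_notP h => hn i.
  rewrite fin_numE gt_eqF ?conj_gtNy //=.
  by apply/negP => /eqP e; apply: hn; exists i.
have -> : (\sum_(i < n) conj_fun (f i) (y i ord0) = +oo)%E.
  apply/esum_eqyP.
    by move=> j _; rewrite gt_eqF ?conj_gtNy.
  by exists i; split => //; rewrite mem_index_enum.
by rewrite mulry gtr0_sg // mul1e.
Qed.

Lemma sum_upd n (F : 'I_n -> R -> R) (p q : 'cV[R]_n) i a :
  (forall j, p j ord0 = if j == i then a else q j ord0) ->
  \sum_(j < n) F j (p j ord0) = \sum_(j < n) F j (q j ord0) - F i (q i ord0) + F i a.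
Proof.
move=> h.
rewrite (bigD1 i) //= [X in _ = X - _ + _](bigD1 i) //= h eqxx.
have -> : \sum_(j < n | j != i) F j (p j ord0) = \sum_(j < n | j != i) F j (q j ord0).
  by apply: eq_bigr => j /negbTE ji; rewrite h ji.
ring.
Qed.

Lemma cs m (a b : 'I_m -> R) :
  (\sum_(i < m) a i * b i) ^+ 2 <= (\sum_(i < m) a i ^+ 2) * (\sum_(i < m) b i ^+ 2).
Proof.
set A := \sum_(i < m) a i ^+ 2; set B := \sum_(i < m) b i ^+ 2; set C := \sum_(i < m) a i * b i.
have key : forall t, 0 <= A + (- (2 * t)) * C + t ^+ 2 * B.
  move=> t.
  have : 0 <= \sum_(i < m) (a i - t * b i) ^+ 2 by apply: sumr_ge0 => i _; exact: sqr_ge0.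
  rewrite (eq_bigr (fun i => a i ^+ 2 + (- (2 * t)) * (a i * b i) + t ^+ 2 * b i ^+ 2)); last first.
    by move=> i _; ring.
  by rewrite !big_split /= -!mulr_sumr.
have B0 : 0 <= B by apply: sumr_ge0 => i _; exact: sqr_ge0.
have A0 : 0 <= A by apply: sumr_ge0 => i _; exact: sqr_ge0.
have [Bz|Bp] := eqVneq B 0.
  have hb : forall i, b i = 0.
    move=> i; apply/eqP; rewrite -sqrf_eq0; apply/eqP.
    by apply: (psumr_eq0P (P := predT) (F := fun i => b i ^+ 2)) => // j _; exact: sqr_ge0.
  have -> : C = 0 by rewrite /C big1 // => i _; rewrite hb mulr0.
  by rewrite expr0n /= mulr_ge0.
have Bg : 0 < B by rewrite lt_def Bp.
have h := key (C / B).
have e : B * (A + - (2 * (C / B)) * C + (C / B) ^+ 2 * B) = A * B - C ^+ 2 by field.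
have : 0 <= B * (A + - (2 * (C / B)) * C + (C / B) ^+ 2 * B) by apply: mulr_ge0.
rewrite e; lra.
Qed.

Lemma lim0 (Z Y : R) : 0 <= Y -> (forall th, 0 < th -> th <= 1 -> Z <= th * Y) -> Z <= 0.
Proof.
move=> Y0 H; rewrite leNgt; apply/negP => Z0.
have ZY : 0 < Z + Y by lra.
have h := H (Z / (Z + Y)) (divr_gt0 Z0 ZY).
have : Z / (Z + Y) <= 1 by rewrite ler_pdivrMr //; lra.
move/h; rewrite mulrAC ler_pdivlMr //.
nra.
Qed.

End H.

Lemma mxB (R : realType) m l (p q : 'M[R]_(m, l)) i j : (p - q) i j = p i j - q i j.
Proof. by rewrite !mxE. Qed.

Lemma z0 : (0 : 'I_1) = ord0.
Proof. by apply/val_inj. Qed.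

Lemma objE' (R : realType) n (N P : R) (f : 'I_n -> R -> R) (y : 'cV[R]_n) :
  (forall i, conj_fun (f i) (y i ord0) \is a fin_num) ->
  (P%:E - N%:E * (\sum_(i < n) conj_fun (f i) (y i ord0))%R)%E
   = (P - N * \sum_(i < n) fine (conj_fun (f i) (y i ord0)))%:E.
Proof. exact: objE. Qed.

Lemma objNy' (R : realType) n (N P : R) (f : 'I_n -> R -> R) (y : 'cV[R]_n) : 0 < N ->
  ~ (forall i, conj_fun (f i) (y i ord0) \is a fin_num) ->
  (P%:E - N%:E * (\sum_(i < n) conj_fun (f i) (y i ord0))%R)%E = -oo%E.
Proof. exact: objNy. Qed.

Theorem lemma2 (R : realType) (n d : nat) (A : 'M[R]_(n, d)) (Rb lam : R)
  (f : 'I_n -> R -> R) (alpha beta : R)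
  (g : 'cV[R]_d -> R) (G : 'cV[R]_d -> 'cV[R]_d) (mu L : R)
  (s : nat) (eta delta : R) (k : nat)
  (x : nat -> 'cV[R]_d) (y : nat -> 'cV[R]_n) (xbar : nat -> 'cV[R]_d) :
  (0 < n)%N ->
  (forall i : 'I_n, \sum_(j < d) A i j ^+ 2 <= Rb) ->
  0 < lam ->
  0 < alpha -> 0 <= beta -> beta / 2 <= alpha ->
  (forall i, convexR (f i) /\ smoothR beta (f i) /\
     exists C : set R, convex_setR C /\ strongly_convex_onR alpha C (f i)
                       /\ linear_outsideR C (f i)) ->
  0 < mu -> 0 < L -> strongly_convexV mu g -> smoothV L g G ->
  0 < eta <= 1 -> 0 < delta ->
  algorithm1 g G f A lam L s eta delta k x y ->
  (forall t, norm1 (xbar t) <= lam /\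
     forall x' : 'cV[R]_d, norm1 x' <= lam ->
       (Lag g f A (xbar t) (y t) <= Lag g f A x' (y t))%E) ->
  forall t : nat, (1 <= t)%N ->
  let Dp := fun t => (Lag g f A (x t.+1) (y t) - Lag g f A (xbar t) (y t))%E in
  let Dd := fun t => (Dstar g f A lam - Dual g f A lam (y t))%E in
  (Dd t - Dd t.-1 + Dp t - Dp t.-1
   <= Lag g f A (x t.+1) (y t) - Lag g f A (x t) (y t)
      - ((2 * delta)^-1 * sqnorm (y t - y t.-1))%:E
      + ((2 * delta * Rb * k%:R / (n%:R ^+ 2)) * sqnorm (xbar t - x t))%:E)%E.
Proof.
move=> n0 hA lam0 _ _ _ _ _ _ _ _ _ del0 [_ [_ halg]] hxbar t t1; cbv zeta.
have hD : forall t, Dual g f A lam (y t) = Lag g f A (xbar t) (y t).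
  move=> t'; rewrite /Dual; apply/le_anti/andP; split.
    by apply: ereal_inf_lbound; exists (xbar t') => //; exact: (hxbar t').1.
  by apply/ereal_infP => _ [x' hx' <-]; exact: (hxbar t').2 x' hx'.
have ht : t.-1.+1 = t := prednK t1.
have N0 : 0 < n%:R^-1 :> R by rewrite invr_gt0 ltr0n.
rewrite ht !hD.
set S := Dstar g f A lam.
set u := y t.-1. set v := y t.
have [Fv|Fv] := pselect (forall i, conj_fun (f i) (v i ord0) \is a fin_num); last first.
  have Lv : forall x', Lag g f A x' v = -oo%E by move=> x'; exact: objNy.
  by rewrite !Lv /= addNye addeNy addNye leNye.
have [Fu|Fu] := pselect (forall i, conj_fun (f i) (u i ord0) \is a fin_num); last first.
  have Lu : forall x', Lag g f A x' u = -oo%E by move=> x'; exact: objNy.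
  rewrite !Lu /=.
  case: S => [r||] /=; by rewrite ?addeNy ?addNye ?leNye.
have Lu : forall x', Lag g f A x' u = _ := fun x' => @objE _ _ _ _ _ _ Fu.
have Lv : forall x', Lag g f A x' v = _ := fun x' => @objE _ _ _ _ _ _ Fv.
have hmin := (hxbar t.-1).2 (xbar t) (hxbar t).1.
rewrite -/u !Lu in hmin; rewrite lee_fin in hmin.
rewrite !Lu !Lv.
case: S => [r||] /=; last 2 first.
- by rewrite ?addeNy ?addNye ?leNye.
- by rewrite ?addeNy ?addNye ?leNye.
rewrite -!EFinD lee_fin.
have [_ [q [hq [I [hI [_ hv]]]]]] := halg t t1.
rewrite -/u -/v in hq hv.
have hv' : forall i, v i ord0 = if i \in I then q i ord0 else u i ord0.
  by move=> i; rewrite -z0 hv.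
have Fq : forall i, conj_fun (f i) (q i ord0) \is a fin_num.
  apply: contrapT => nFq.
  have := hq u; rewrite (@objE' _ _ _ _ _ _ Fu) (@objNy' _ _ _ _ _ _ N0 nFq) leeNy_eq.
  by [].
have hP : forall i, n%:R^-1 * (fine (conj_fun (f i) (q i ord0)) - fine (conj_fun (f i) (u i ord0)))
   <= n%:R^-1 * ((A *m x t) i ord0 * (q i ord0 - u i ord0)) - 2 * (2 * delta)^-1 * (q i ord0 - u i ord0) ^+ 2.
  move=> i.
  have e0 : 0 <= (2 * delta)^-1 by rewrite invr_ge0; lra.
  suff : n%:R^-1 * (fine (conj_fun (f i) (q i ord0)) - fine (conj_fun (f i) (u i ord0)))
     - n%:R^-1 * ((A *m x t) i ord0 * (q i ord0 - u i ord0)) + 2 * (2 * delta)^-1 * (q i ord0 - u i ord0) ^+ 2 <= 0 by lra.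
  apply: (@lim0 _ _ ((2 * delta)^-1 * (q i ord0 - u i ord0) ^+ 2)).
    by apply: mulr_ge0 => //; exact: sqr_ge0.
  move=> th th0 th1.
  have hca := @conj_cvx _ (f i) (q i ord0) (u i ord0) _ _ (1 - th) (esym (fineK (Fq i))) (esym (fineK (Fu i))).
  have hth : 0 <= 1 - th <= 1 by apply/andP; split; lra.
  have hca2 := hca hth.
  have Fa := @fin_le _ _ _ (@conj_gtNy _ _ _) hca2.
  have hca3 := hca2; rewrite -(fineK Fa) lee_fin in hca3.
  pose y' := \col_j (if j == i then (1 - th) * q i ord0 + (1 - (1 - th)) * u i ord0 else q j ord0) : 'cV[R]_n.
  have hy' : forall j, y' j ord0 = if j == i then (1 - th) * q i ord0 + (1 - (1 - th)) * u i ord0 else q j ord0.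
    by move=> j; rewrite mxE.
  have Fy' : forall j, conj_fun (f j) (y' j ord0) \is a fin_num.
    by move=> j; rewrite hy'; case: eqP => [->|].
  have := hq y'; rewrite (@objE' _ _ _ _ _ _ Fy') (@objE' _ _ _ _ _ _ Fq) lee_fin.
  have E1 : dotv (A *m x t) y' = dotv (A *m x t) q - (A *m x t) i ord0 * q i ord0
      + (A *m x t) i ord0 * ((1 - th) * q i ord0 + (1 - (1 - th)) * u i ord0) :=
    @sum_upd _ _ (fun j w => (A *m x t) j ord0 * w) _ _ _ _ hy'.
  have hz : forall j, (y' - u) j ord0 = if j == i then ((1 - th) * q i ord0 + (1 - (1 - th)) * u i ord0) - u i ord0 else (q - u) j ord0.
    by move=> j; rewrite !mxB hy'; case: eqP => [->|].
  have E2 : sqnorm (y' - u) = sqnorm (q - u) - (q - u) i ord0 * (q - u) i ord0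
      + (((1 - th) * q i ord0 + (1 - (1 - th)) * u i ord0) - u i ord0) * (((1 - th) * q i ord0 + (1 - (1 - th)) * u i ord0) - u i ord0) :=
    @sum_upd _ _ (fun j w => w * w) _ _ _ _ hz.
  have E3 : \sum_(j < n) fine (conj_fun (f j) (y' j ord0)) = \sum_(j < n) fine (conj_fun (f j) (q j ord0))
      - fine (conj_fun (f i) (q i ord0)) + fine (conj_fun (f i) ((1 - th) * q i ord0 + (1 - (1 - th)) * u i ord0)) :=
    @sum_upd _ _ (fun j w => fine (conj_fun (f j) w)) _ _ _ _ hy'.
  rewrite E1 E2 E3 mxB => H.
  have hN := ler_wpM2l (ltW N0) hca3.
  have : th * ((n%:R^-1 * (fine (conj_fun (f i) (q i ord0)) - fine (conj_fun (f i) (u i ord0)))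
     - n%:R^-1 * ((A *m x t) i ord0 * (q i ord0 - u i ord0)) + 2 * (2 * delta)^-1 * (q i ord0 - u i ord0) ^+ 2)
     - th * ((2 * delta)^-1 * (q i ord0 - u i ord0) ^+ 2)) <= 0 by lra.
  by rewrite pmulr_rle0 // subr_le0.
have d0 : delta != 0 by rewrite gt_eqF.
pose Tt := fun i : 'I_n =>
  (2 * n%:R^-1) * (u i 0 * (A *m xbar t) i 0) + (- (2 * n%:R^-1)) * fine (conj_fun (f i) (u i ord0))
  + (- (2 * n%:R^-1)) * (v i 0 * (A *m xbar t) i 0) + (2 * n%:R^-1) * fine (conj_fun (f i) (v i ord0))
  + (- n%:R^-1) * (u i 0 * (A *m x t) i 0) + n%:R^-1 * fine (conj_fun (f i) (u i ord0))
  + n%:R^-1 * (v i 0 * (A *m x t) i 0) + (- n%:R^-1) * fine (conj_fun (f i) (v i ord0)).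
pose Ut := fun i : 'I_n =>
  (- (2 * delta)^-1) * ((v - u) i 0 * (v - u) i 0)
  + (if i \in I then (2 * delta * n%:R^-1 ^+ 2) * ((A *m (xbar t - x t)) i 0) ^+ 2 else 0).
have hT : forall i, Tt i <= Ut i.
  move=> i; rewrite /Tt /Ut !z0 !mxB mulmxBr !mxB.
  have [hi|hi] := boolP (i \in I); rewrite hv' ?hi ?(negbTE hi); last by lra.
  have hPi := hP i.
  have sq : 0 <= (2 * delta)^-1 * (q i ord0 - u i ord0) ^+ 2
      + 2 * n%:R^-1 * (q i ord0 - u i ord0) * ((A *m xbar t) i ord0 - (A *m x t) i ord0)
      + 2 * delta * n%:R^-1 ^+ 2 * ((A *m xbar t) i ord0 - (A *m x t) i ord0) ^+ 2.
    have -> : (2 * delta)^-1 * (q i ord0 - u i ord0) ^+ 2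
      + 2 * n%:R^-1 * (q i ord0 - u i ord0) * ((A *m xbar t) i ord0 - (A *m x t) i ord0)
      + 2 * delta * n%:R^-1 ^+ 2 * ((A *m xbar t) i ord0 - (A *m x t) i ord0) ^+ 2
      = ((q i ord0 - u i ord0) + 2 * delta * n%:R^-1 * ((A *m xbar t) i ord0 - (A *m x t) i ord0)) ^+ 2 / (2 * delta).
      by field; rewrite d0 /= pnatr_eq0 -lt0n.
    by apply: divr_ge0; [exact: sqr_ge0 | lra].
  lra.
have Hs : \sum_(i < n) Tt i <= \sum_(i < n) Ut i by apply: ler_sum => i _; exact: hT.
rewrite /Tt /Ut in Hs.
rewrite !big_split /= -!mulr_sumr -big_mkcond /= -mulr_sumr in Hs.
have hCS : \sum_(i in I) ((A *m (xbar t - x t)) i 0) ^+ 2 <= k%:R * (Rb * sqnorm (xbar t - x t)).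
  have -> : k%:R * (Rb * sqnorm (xbar t - x t)) = \sum_(i in I) (Rb * sqnorm (xbar t - x t)).
    by rewrite sumr_const hI mulr_natl.
  apply: ler_sum => i _; rewrite mxE.
  apply: le_trans (@cs _ _ (fun j => A i j) (fun j => (xbar t - x t) j 0)) _.
  have -> : sqnorm (xbar t - x t) = \sum_(j < d) (xbar t - x t) j 0 ^+ 2.
    by apply: eq_bigr => j _; rewrite expr2.
  apply: ler_wpM2r; last exact: hA.
  by apply: sumr_ge0 => j _; exact: sqr_ge0.
have K0 : 0 <= 2 * delta * n%:R^-1 ^+ 2 by apply: mulr_ge0; [lra | exact: sqr_ge0].
have hCS' := ler_wpM2l K0 hCS.
have hK : 2 * delta * Rb * k%:R / n%:R ^+ 2 * sqnorm (xbar t - x t)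
   = 2 * delta * n%:R^-1 ^+ 2 * (k%:R * (Rb * sqnorm (xbar t - x t))).
  by rewrite exprVn; ring.
rewrite hK.
move: hmin hCS' Hs; rewrite /sqnorm /dotv => hmin hCS' Hs.
lra.
Qed.
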